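(* Let $p$ be a prime, let $G$ be a finite soluble group with $O_p(G)=1$, and let $A$ be a non-empty normal subset of $G$ consisting of elements of order $p$ such that every element of $A^2=\{xy\mid x,y\in A\}$ is a $p$-element. Let $a\in A\setminus G'$ and $c\in G'$, and suppose that $X=\langle c,a\rangle$ is elementary abelian of order $p^2$. Then $|a^G\cap X|<p$.
   Context: A normal subset of $G$ is a subset closed under conjugation by elements of $G$. $O_p(G)$ is the largest normal $p$-subgroup of $G$, $G'$ is the derived subgroup, and $a^G$ is the conjugacy class of $a$. *)

(* Defs.v *)
From mathcomp Require Import all_boot all_fingroup all_solvable.
Set Implicit Arguments. Unset Strict Implicit. Unset Printing Implicit Defensive.

(* Main.v *)
Require Import Defs.
From mathcomp Require Import all_boot all_fingroup all_solvable.
From mathcomp Require Import all_algebra.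
Local Open Scope group_scope.

Module Helpers.
Set Implicit Arguments. Unset Strict Implicit. Unset Printing Implicit Defensive.
Import GRing.Theory FinRing.Theory.
Import FiniteModule.
Local Open Scope ring_scope.
Local Open Scope group_scope.

Lemma rot_sum (M : zmodType) (p : nat) (f : nat -> M) :
  (0 < p)%N -> f p = f 0%N -> \sum_(k < p) f k.+1 = \sum_(k < p) f k.
Proof.
case: p => // p _ fp.
rewrite big_ord_recr big_ord_recl /= fp addrC; congr (_ + _).
Qed.

Section Brauer.
Variables (gT : finGroupType) (V : {group gT}) (abV : abelian V).
Local Notation M := (fmod_of abV).

Lemma fixE (w : M) g : g \in 'N(V) -> (w ^@ g == w) = (val w \in 'C[g]).
Proof.
move=> Ng; apply/eqP/cent1P => [E | E].
  apply/commgP/conjg_fixP; by rewrite -fmvalJ // E.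
apply: val_inj; rewrite fmvalJ //; exact/conjg_fixP/commgP.
Qed.

Definition Sg (p : nat) g (w : M) := \sum_(k < p) w ^@ (g ^+ k).

Lemma Sg_fix p g w : (0 < p)%N -> g \in 'N(V) -> g ^+ p = 1 -> Sg p g w ^@ g = Sg p g w.
Proof.
move=> p0 Ng gp; rewrite /Sg actr_sum.
rewrite -(@rot_sum _ p (fun k => w ^@ (g ^+ k))) //=; last by rewrite gp expg0.
apply: eq_bigr => k _; by rewrite -actrM ?groupX // expgSr.
Qed.

Lemma brauer (a c : gT) (p : nat) :
  prime p -> coprime #|V| p -> a \in 'N(V) -> c \in 'N(V) -> commute a c ->
  a ^+ p = 1 -> c ^+ p = 1 ->
  (forall j, 'C_V[a * c ^+ j] \subset 'C[c]) -> V \subset 'C[c].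
Proof.
move=> pr coVp Na Nc cac ap cp hyp.
have p0 : (0 < p)%N by apply: prime_gt0.
apply/subsetP => v Vv.
pose u : M := fmod abV v.
have valu : val u = v by rewrite /u fmodK.
have cfix (w : M) : val w \in 'C[c] -> w ^@ c = w by move=> h; apply/eqP; rewrite fixE.
pose T := \sum_(j < p) Sg p (a * c ^+ j) u.
have fixT : T ^@ c = T.
  rewrite /T actr_sum; apply: eq_bigr => j _; apply: cfix.
  have Nj : a * c ^+ j \in 'N(V) by rewrite groupM ?groupX.
  apply: (subsetP (hyp j)); rewrite inE fmodP /= -fixE //.
  apply/eqP; apply: Sg_fix => //.
  by rewrite expgMn ?ap ?mul1g -?expgM 1?mulnC ?expgM ?cp ?expg1n //; apply: commuteX.
have eT : T = u *+ p + \sum_(k < p.-1) Sg p (c ^+ k.+1) (u ^@ a ^+ k.+1).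
  rewrite /T /Sg.
  have -> : \sum_(j < p) \sum_(k < p) u ^@ (a * c ^+ j) ^+ k =
            \sum_(j < p) \sum_(k < p) (u ^@ a ^+ k) ^@ (c ^+ k) ^+ j.
    apply: eq_bigr => j _; apply: eq_bigr => k _.
    rewrite -actrM ?groupX // expgMn; last by apply: commuteX.
    by rewrite -!expgM (mulnC j k).
  rewrite exchange_big /=.
  case: (p) p0 => // q _ /=.
  rewrite big_ord_recl /=; congr (_ + _).
    rewrite expg0 (eq_bigr (fun _ => u)); first by rewrite sumr_const card_ord.
    by move=> j _; rewrite !expg0 expg1n; apply: val_inj; rewrite !fmvalJ ?group1 // !conjg1.
have fixS : (\sum_(k < p.-1) Sg p (c ^+ k.+1) (u ^@ a ^+ k.+1)) ^@ c
            = \sum_(k < p.-1) Sg p (c ^+ k.+1) (u ^@ a ^+ k.+1).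
  rewrite actr_sum; apply: eq_bigr => k _; apply: cfix.
  set w := Sg _ _ _.
  have : w ^@ c ^+ k.+1 = w.
    apply: Sg_fix => //; first by rewrite groupX.
    by rewrite -expgM mulnC expgM cp expg1n.
  move/eqP; rewrite fixE ?groupX // cent1C -cycle_subG => sub.
  rewrite cent1C; apply: (subsetP sub).
  have kp : (k.+1 < p)%N by rewrite -ltn_predRL (ltn_ord k).
  have co : coprime #[c] k.+1.
    apply: coprime_dvdl (_ : #[c] %| p)%N _; first by rewrite order_dvdn cp.
    by rewrite prime_coprime // gtnNdvd.
  by have := generator_coprime c k.+1; rewrite co => /eqP <-; apply: cycle_id.
have fixUp : (u *+ p) ^@ c = u *+ p.
  have -> : u *+ p = T - \sum_(k < p.-1) Sg p (c ^+ k.+1) (u ^@ a ^+ k.+1).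
    by rewrite eT addrK.
  by rewrite actAr actNr fixT fixS.
move/eqP: fixUp; rewrite fixE // fmvalZ valu => cvp.
by rewrite -(expgK coVp Vv) groupX.
Qed.
End Brauer.

End Helpers.

Module Helpers2.
Set Implicit Arguments. Unset Strict Implicit. Unset Printing Implicit Defensive.
Local Open Scope group_scope.
Import Helpers.

Lemma cent_Fitting (gT : finGroupType) (G : {group gT}) :
  solvable G -> 'C_G('F(G)) \subset 'F(G).
Proof.
move=> solG.
have nsFG := Fitting_normal G.
have nsCG : 'C_G('F(G)) <| G.
  by have := subcent_normal G 'F(G); rewrite (setIidPl (normal_norm nsFG)).
set C := 'C_G('F(G)) in nsCG *.
apply/negPn/negP => nCF.
have solC : solvable C by apply: solvableS solG; apply: normal_sub.
have exP : exists n, C^`(n) \subset 'F(G).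
  by have /derivedP[n Cn] := solC; exists n; rewrite Cn sub1G.
pose m := ex_minn exP.
have Pm : C^`(m) \subset 'F(G) by rewrite /m; case: ex_minnP.
have minm : forall k, C^`(k) \subset 'F(G) -> m <= k.
  by rewrite /m; case: ex_minnP.
have m0 : m != 0.
  by apply/eqP=> m0; rewrite m0 /= in Pm; rewrite Pm in nCF.
set D := C^`(m.-1).
have nDF : ~~ (D \subset 'F(G)).
  apply/negP=> sDF; have := minm _ sDF; rewrite leqNgt.
  by case: (m) m0 => // k _; rewrite ltnSn.
have D'F : D^`(1) \subset 'F(G) by rewrite /D derg1 -dergSn prednK // lt0n.
have sDC : D \subset C by apply: der_sub.
have cDF : D \subset 'C('F(G)) by apply: subset_trans sDC (subsetIr _ _).
have nilD : nilpotent D.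
  apply/lcnP; exists 2; rewrite lcnSn lcn2; apply/commG1P.
  apply: subset_trans D'F _; by rewrite centsC.
have nsDG : D <| G by apply: char_normal_trans (der_char _ _) nsCG.
by rewrite (Fitting_max nsDG nilD) in nDF.
Qed.

Lemma stab n : forall (gT : finGroupType) (K : {group gT}) (a c : gT) (p : nat),
  (#|K| <= n)%N -> prime p -> solvable K -> coprime #|K| p ->
  a \in 'N(K) -> c \in 'N(K) -> commute a c -> a ^+ p = 1 -> c ^+ p = 1 ->
  (forall j, 'C_K[a * c ^+ j] \subset 'C[c]) -> K \subset 'C[c].
Proof.
elim: n => [|n IHn] gT K a c p.
  by rewrite leqNgt cardG_gt0.
move=> leK pr solK coK Na Nc cac ap cp hyp.
have [abK | nabK] := boolP (abelian K).
  exact: (brauer abK pr coK Na Nc cac ap cp hyp).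
set N := K^`(1).
have N1 : N != 1 by apply/eqP => /derG1P; rewrite (negbTE nabK).
have sNK : N \subset K by apply: der_sub.
have Kn1 : K :!=: 1 by apply: contraNneq N1 => K1; rewrite /N K1 derg1 commG1.
have prNK : N \proper K by exact: (sol_der1_proper solK (subxx K) Kn1).
have nNa : a \in 'N(N).
  by rewrite -cycle_subG; apply: char_norm_trans (der_char 1 K) _; rewrite cycle_subG.
have nNc : c \in 'N(N).
  by rewrite -cycle_subG; apply: char_norm_trans (der_char 1 K) _; rewrite cycle_subG.
have solN : solvable N by apply: solvableS solK.
have coN : coprime #|N| p by apply: coprimeSg coK.
have cNc : N \subset 'C[c].
  apply: (IHn _ _ a c p) => //.
  - by rewrite -ltnS; apply: leq_trans leK; apply: proper_card.
  - by move=> j; apply: subset_trans (hyp j); apply: setSI.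
have nKa : a \in 'N(K) := Na.
have cKNc : K / N \subset 'C[coset N c].
  apply: (IHn _ _ (coset N a) (coset N c) p) => //.
  - by rewrite -ltnS; apply: leq_trans leK; apply: ltn_quotient.
  - exact: quotient_sol.
  - by apply: coprime_dvdl coK; apply: dvdn_quotient.
  - rewrite -cycle_subG -quotient_cycle //; apply: quotient_norms; by rewrite cycle_subG.
  - rewrite -cycle_subG -quotient_cycle //; apply: quotient_norms; by rewrite cycle_subG.
  - by rewrite /commute -!morphM ?cac.
  - by rewrite -morphX ?ap ?morph1.
  - by rewrite -morphX ?cp ?morph1.
  move=> j; set y := a * c ^+ j.
  have Ny : y \in 'N(N) by rewrite groupM ?groupX.
  have NKy : y \in 'N(K) by rewrite groupM ?groupX.
  rewrite -morphX // -morphM ?groupX // -/y -cent_cycle -quotient_cycle //.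
  rewrite -coprime_norm_quotient_cent ?cycle_subG //; last first.
    apply: coprime_dvdr coN; rewrite -orderE order_dvdn.
    by rewrite /y expgMn ?ap ?mul1g -?expgM 1?mulnC ?expgM ?cp ?expg1n //; apply: commuteX.
  rewrite (_ : 'C_K(<[y]>%G) = 'C_K[y]); last by rewrite /= cent_cycle.
  apply: subset_trans (morphim_cent1 _ nNc).
  by apply: morphimS; apply: hyp.
have : 'C_K(<[c]>) / N = 'C_(K / N)(<[c]> / N).
  apply: coprime_norm_quotient_cent => //; rewrite ?cycle_subG //.
  apply: coprime_dvdr coN; rewrite -orderE order_dvdn cp //.
rewrite quotient_cycle // !cent_cycle (setIidPl cKNc) => eqQ.
have sNC : N \subset 'C_K[c] by rewrite subsetI sNK.
have sKC : K \subset 'C_K[c].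
  by rewrite -(quotientSGK (normal_norm (der_normal 1 K)) sNC) eqQ.
by apply: subset_trans sKC (subsetIr _ _).
Qed.

End Helpers2.
Import Helpers2.

Theorem lemma3p1 (gT : finGroupType) (G : {group gT}) (p : nat) (A : {set gT})
    (a c : gT) :
  prime p ->
  solvable G ->
  'O_p(G) = 1 ->
  A \subset G ->
  A != set0 ->
  (forall g x, g \in G -> x \in A -> x ^ g \in A) ->
  (forall x, x \in A -> #[x] = p) ->
  (forall x y, x \in A -> y \in A -> p.-elt (x * y)) ->
  a \in A -> a \notin G^`(1) ->
  c \in G^`(1) ->
  p.-abelem <<[set c; a]>> -> #|<<[set c; a]>>| = (p ^ 2)%N ->
  #|(a ^: G) :&: <<[set c; a]>>| < p.
Proof.
move=> pr solG Op1 sAG _ nA oA pA Aa nGa Gc abX oX.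
set X := <<[set c; a]>> in abX oX *.
have [abelX expX] := abelemP pr abX.
have Xa : a \in X by rewrite mem_gen // !inE eqxx orbT.
have Xc : c \in X by rewrite mem_gen // !inE eqxx.
have cac : commute a c by apply: (centsP abelX).
have ap := expX a Xa; have cp := expX c Xc.
have p1 : (1 < p)%N by apply: prime_gt1.
have notcyc : forall g, g ^+ p = 1 -> ~~ ([set c; a] \subset <[g]>).
  move=> g gp; apply/negP => sub.
  have : (#|X| <= #[g])%N by rewrite /X orderE; apply: subset_leq_card; rewrite gen_subG.
  rewrite oX; have : (#[g] <= p)%N by apply: dvdn_leq; rewrite ?prime_gt0 // order_dvdn gp.
  move=> h1 h2; have := leq_trans h2 h1.
  by rewrite leqNgt -{1}(muln1 p) expnS expn1 ltn_pmul2l ?prime_gt0 // p1.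
have c1 : c != 1.
  apply/eqP => c1; have := notcyc a ap; rewrite subUset !sub1set cycle_id c1 group1 //.
have oc : #[c] = p.
  by apply/prime_nt_dvdP; rewrite ?order_dvdn ?cp // order_eq1.
have Ga : a \in G by apply: (subsetP sAG).
have GG' : G^`(1) \subset G by apply: der_sub.
have G'c : G^`(1) :&: X \subset <[c]> -> True by [].
have sub1 : a ^: G :&: X \subset a *: <[c]>.
  apply/subsetP => x /setIP[/imsetP[g Gg ->] Xx].
  rewrite mem_lcoset.
  have G'x : a^-1 * a ^ g \in G^`(1) by rewrite derg1 -/(commg a g) mem_commg.
  have Xx' : a^-1 * a ^ g \in X by rewrite groupM ?groupV.
  apply/negPn/negP => ncx.
  have sCH : <[c]> \subset G^`(1) :&: X by rewrite cycle_subG inE Gc Xc.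
  have prH : <[c]> \proper G^`(1) :&: X.
    by rewrite properEneq sCH andbT; apply: contraNneq ncx => ->; rewrite inE G'x.
  have dvH : (#|G^`(1) :&: X| %| p ^ 2)%N by rewrite -oX cardSg // subsetIr.
  have [m lem2 eH] := dvdn_pfactor _ _ pr dvH.
  have ltH := proper_card prH; rewrite eH -orderE oc in ltH.
  have m2 : m = 2.
    move: lem2 ltH; case: m {eH} => [|[|[|]]] //=; rewrite ?expn0 ?expn1.
    - by move=> _; rewrite ltnNge ltnW.
    - by rewrite ltnn.
  have eqH : G^`(1) :&: X = X.
    apply/eqP; rewrite eqEcard subsetIr /= eH m2 oX leqnn //.
  by move: Xa; rewrite -eqH inE (negbTE nGa).
rewrite ltnNge; apply/negP => ge.
have eqS : a ^: G :&: X = a *: <[c]>.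
  by apply/eqP; rewrite eqEcard sub1 card_lcoset -orderE oc ge.
have inA : forall j, a * c ^+ j \in A.
  move=> j; have : a * c ^+ j \in a ^: G :&: X by rewrite eqS mem_lcoset mulKg mem_cycle.
  by case/setIP => /imsetP[g Gg ->] _; apply: nA.
have Gc' : c \in G := subsetP GG' c Gc.
set F := 'F(G).
have nsFG : F <| G := Fitting_normal G.
have p'F : p^'.-group F.
  have := nilpotent_pcoreC p (Fitting_nil G); rewrite p_core_Fitting Op1 dprod1g => eF.
  by rewrite /F -eF; apply: pcore_pgroup.
have key : forall j, 'C_F[a * c ^+ j] \subset 'C[c].
  move=> j; apply/subsetP => m /setIP[Fm /cent1P cmy].
  set y := a * c ^+ j in cmy *.
  set x := a * c ^+ (j + p.-1).
  set z := a * c ^+ j.+1.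
  have Ay := inA j; have Ax := inA (j + p.-1); have Az := inA j.+1.
  have Gz : z \in G := subsetP sAG z Az.
  have Gm : m \in G := subsetP (normal_sub nsFG) m Fm.
  have xz : x * z = y * y.
    have swap k : c ^+ k * a = a * c ^+ k by rewrite (commuteX k cac).
    rewrite /x /z /y !mulgA -!(mulgA a (c ^+ _) a) !swap -!mulgA -!expgD.
    congr (a * (a * _)).
    have -> : (j + p.-1 + j.+1 = j + j + p)%N.
      by rewrite -addnA addnS -addSn prednK ?prime_gt0 // (addnC p j) addnA.
    by rewrite expgD cp mulg1.
  set t := [~ m, z].
  have Ft : t \in F.
    by rewrite /t /commg groupM ?groupV ?memJ_norm // (subsetP (normal_norm nsFG)).
  have Xy : y \in X by rewrite groupM ?groupX.
  have Xz : z \in X by rewrite groupM ?groupX.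
  have cyz : commute y z by apply: (centsP abelX).
  have cym : commute y m by [].
  have cty : commute t y.
    apply: commute_sym; rewrite /t /commg; apply: commuteM.
      by apply: commuteV.
    have yz : y ^ z = y by rewrite conjgE cyz mulKg.
    by rewrite /commute -{1 2}yz -!conjMg cym.
  have gen : forall x0 z0 y0 m0 : gT, commute m0 y0 -> x0 * z0 = y0 * y0 ->
      x0 ^ m0 * z0 = y0 * y0 * [~ m0, z0].
    move=> x0 z0 y0 m0 c0 e0.
    have cmyy : y0 * y0 * m0^-1 = m0^-1 * (y0 * y0).
      have h : commute m0^-1 y0 by apply: commute_sym; apply: commuteV; apply: commute_sym.
      by have := commuteM h h.
    by rewrite /commg !conjgE [RHS]mulgA cmyy -e0 !mulgA mulgK.
  have e : x ^ m * z = (y * y) * t by apply: gen.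
  have pe : p.-elt (x ^ m * z) := pA _ _ (nA _ _ Gm Ax) Az.
  have py : p.-elt y by rewrite /p_elt (oA y Ay) pnat_id.
  have cyyt : commute (y * y) t by apply: commute_sym; apply: commuteM.
  have pt : p.-elt t.
    have -> : t = (y * y)^-1 * (x ^ m * z) by rewrite e mulKg.
    apply: p_eltM; last exact: pe.
      rewrite e; apply: commute_sym; apply: commuteV; apply: commute_sym.
      by apply: commuteM.
    by rewrite p_eltV; apply: p_eltM.
  have t1 : t = 1.
    apply/eqP; rewrite -order_eq1; apply/eqP; apply: (pnat_1 pt).
    exact: mem_p_elt p'F Ft.
  have cmz : commute m z by apply/commgP; rewrite -/t t1.
  have ec : c = y^-1 * z by rewrite /y /z expgSr (mulgA a) mulKg.
  by apply/cent1P; rewrite ec; apply: commuteM (commuteV _) cmz.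
have cFc : F \subset 'C[c].
  apply: (stab (leqnn #|F|) pr _ _ _ _ cac ap cp key).
  - exact: nilpotent_sol (Fitting_nil G).
  - exact: p'nat_coprime p'F (pnat_id pr).
  - exact: subsetP (normal_norm nsFG) a Ga.
  - exact: subsetP (normal_norm nsFG) c Gc'.
have Fc : c \in F.
  by apply: (subsetP (cent_Fitting solG)); rewrite inE Gc' -sub_cent1 cFc.
have pc : p.-elt c by rewrite /p_elt oc pnat_id.
have := pnat_1 pc (mem_p_elt p'F Fc); rewrite oc => ep.
by rewrite ep in p1.
Qed.
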